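(* Let $n\ge2$ be an integer and $\lambda>0$, and let $\gamma(t)=(\omega(t),x(t),y(t))$, $t\in(S,T)$ the maximal interval of existence, be a solution with $\omega>0$ of the system $$\frac{d\omega}{dt}=x\omega,\qquad \frac{dx}{dt}=x^2-xy+n-1-\lambda\omega^2,\qquad \frac{dy}{dt}=xy-nx^2-\lambda\omega^2.$$ Suppose $x(t_0)>1$ and $\frac{dx}{dt}(t_0)>0$ at some $t_0\in(S,T)$. Then $\int_{t_0}^T\omega(\sigma)\,d\sigma<\infty$. *)

(* Defs.v *)
From Stdlib Require Import Reals.
From Coquelicot Require Import Coquelicot.
Open Scope R_scope.

Definition in_ival (S T : Rbar) (t : R) : Prop :=
  Rbar_lt S (Finite t) /\ Rbar_lt (Finite t) T.

Definition is_solution (n : nat) (lam : R) (S T : Rbar)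
  (w x y : R -> R) : Prop :=
  forall t, in_ival S T t ->
    is_derive w t (x t * w t) /\
    is_derive x t (x t ^ 2 - x t * y t + INR n - 1 - lam * w t ^ 2) /\
    is_derive y t (x t * y t - INR n * x t ^ 2 - lam * w t ^ 2).

Definition is_maximal_solution (n : nat) (lam : R) (S T : Rbar)
  (w x y : R -> R) : Prop :=
  Rbar_lt S T /\
  is_solution n lam S T w x y /\
  forall (S' T' : Rbar) (w' x' y' : R -> R),
    Rbar_le S' S -> Rbar_le T T' ->
    is_solution n lam S' T' w' x' y' ->
    (forall t, in_ival S T t -> w' t = w t /\ x' t = x t /\ y' t = y t) ->
    S' = S /\ T' = T.

(* Main.v *)
Require Import Defs.
From Stdlib Require Import Reals Lra Psatz Classical.
From Coquelicot Require Import Coquelicot.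
Open Scope R_scope.

Lemma cont_gt (f : R -> R) s l : continuous f s -> l < f s ->
  exists d, 0 < d /\ forall u, Rabs (u - s) < d -> l < f u.
Proof.
  intros Hc Hl.
  assert (He : 0 < f s - l) by lra.
  destruct (proj1 (filterlim_locally f (f s)) Hc (mkposreal _ He)) as [d Hd].
  exists d. split. apply cond_pos.
  intros u Hu. specialize (Hd u Hu).
  unfold ball in Hd; simpl in Hd; unfold AbsRing_ball, abs, minus, plus, opp in Hd; simpl in Hd.
  apply Rabs_lt_between' in Hd. simpl in Hd. lra.
Qed.

Lemma cont_lt (f : R -> R) s l : continuous f s -> f s < l ->
  exists d, 0 < d /\ forall u, Rabs (u - s) < d -> f u < l.
Proof.
  intros Hc Hl.
  assert (He : 0 < l - f s) by lra.
  destruct (proj1 (filterlim_locally f (f s)) Hc (mkposreal _ He)) as [d Hd].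
  exists d. split. apply cond_pos.
  intros u Hu. specialize (Hd u Hu).
  unfold ball in Hd; simpl in Hd; unfold AbsRing_ball, abs, minus, plus, opp in Hd; simpl in Hd.
  apply Rabs_lt_between' in Hd. simpl in Hd. lra.
Qed.

Lemma deriv_cont_pt (f df : R -> R) t : is_derive f t (df t) -> continuity_pt f t.
Proof.
  intros H. apply continuity_pt_filterlim. apply (ex_derive_continuous (K:=R_AbsRing) (V:=R_NormedModule)). exists (df t); auto.
Qed.

Lemma mono_le (f df : R -> R) a b : a <= b ->
  (forall t, a <= t <= b -> is_derive f t (df t)) ->
  (forall t, a <= t <= b -> df t <= 0) -> f b <= f a.
Proof.
  intros Hab Hd Hs.
  destruct (MVT_gen f a b df) as [c [Hc Heq]].
  - intros t Ht. rewrite Rmin_left in Ht by lra. rewrite Rmax_right in Ht by lra.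
    apply Hd; lra.
  - intros t Ht. rewrite Rmin_left in Ht by lra. rewrite Rmax_right in Ht by lra.
    apply (deriv_cont_pt f df). apply Hd; lra.
  - rewrite Rmin_left in Hc by lra. rewrite Rmax_right in Hc by lra.
    specialize (Hs c Hc). nra.
Qed.

Lemma mono_ge (f df : R -> R) a b : a <= b ->
  (forall t, a <= t <= b -> is_derive f t (df t)) ->
  (forall t, a <= t <= b -> 0 <= df t) -> f a <= f b.
Proof.
  intros Hab Hd Hs.
  destruct (MVT_gen f a b df) as [c [Hc Heq]].
  - intros t Ht. rewrite Rmin_left in Ht by lra. rewrite Rmax_right in Ht by lra.
    apply Hd; lra.
  - intros t Ht. rewrite Rmin_left in Ht by lra. rewrite Rmax_right in Ht by lra.
    apply (deriv_cont_pt f df). apply Hd; lra.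
  - rewrite Rmin_left in Hc by lra. rewrite Rmax_right in Hc by lra.
    specialize (Hs c Hc). nra.
Qed.

Lemma barrier (g dg : R -> R) a b : a <= b ->
  (forall t, a <= t <= b -> is_derive g t (dg t)) ->
  (forall t, a <= t <= b -> continuous dg t) ->
  0 < g a ->
  (forall t, a < t <= b -> (forall u, a <= u < t -> 0 < g u) -> g t = 0 -> 0 < dg t) ->
  forall t, a <= t <= b -> 0 < g t.
Proof.
  intros Hab Hd Hdc Ha Hyp c Hc.
  destruct (Rlt_or_le 0 (g c)) as [|Hgc]; auto. exfalso.
  assert (Hgcont : forall t, a <= t <= b -> continuous g t).
  { intros t Ht. apply (ex_derive_continuous (K:=R_AbsRing) (V:=R_NormedModule)). exists (dg t); auto. }
  set (E := fun s => a <= s <= c /\ forall u, a <= u <= s -> 0 < g u).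
  assert (HE : E a). { split. lra. intros u Hu. replace u with a by lra. auto. }
  assert (Hb : bound E). { exists c. intros s [Hs _]. lra. }
  destruct (completeness E Hb (ex_intro _ a HE)) as [m [Hub Hlub]].
  assert (Ham : a <= m) by (apply Hub; auto).
  assert (Hmc : m <= c). { apply Hlub. intros s [Hs _]. lra. }
  assert (C1 : forall u, a <= u < m -> 0 < g u).
  { intros u Hu. destruct (Rlt_or_le 0 (g u)) as [|Hgu]; auto. exfalso.
    assert (m <= u); [|lra]. apply Hlub. intros s [Hs1 Hs2].
    destruct (Rle_or_lt s u); auto. assert (0 < g u) by (apply Hs2; lra). lra. }
  assert (C2 : 0 < g m).
  { destruct (Req_dec m a) as [->|Hma]; auto.
    destruct (Rtotal_order (g m) 0) as [Hneg|[Hz|Hpos]]; auto; exfalso.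
    - destruct (cont_lt g m 0 (Hgcont m ltac:(lra)) Hneg) as [d [Hd0 Hd1]].
      set (u := Rmax a (m - d/2)).
      assert (a <= u < m). { unfold u, Rmax; destruct Rle_dec; lra. }
      assert (Rabs (u - m) < d). { apply Rabs_lt_between'. unfold u, Rmax; destruct Rle_dec; lra. }
      specialize (Hd1 u H0). specialize (C1 u H). lra.
    - assert (Hp : 0 < dg m) by (apply Hyp; auto; lra).
      destruct (cont_gt dg m 0 (Hdc m ltac:(lra)) Hp) as [d [Hd0 Hd1]].
      set (u := Rmax a (m - d/2)).
      assert (a <= u < m). { unfold u, Rmax; destruct Rle_dec; lra. }
      destruct (MVT_gen g u m dg) as [xi [Hxi Heq]].
      + intros t Ht. rewrite Rmin_left in Ht by lra. rewrite Rmax_right in Ht by lra.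
        apply Hd; lra.
      + intros t Ht. rewrite Rmin_left in Ht by lra. rewrite Rmax_right in Ht by lra.
        apply (deriv_cont_pt g dg). apply Hd; lra.
      + rewrite Rmin_left in Hxi by lra. rewrite Rmax_right in Hxi by lra.
        assert (Rabs (xi - m) < d). { apply Rabs_lt_between'. unfold u, Rmax in *; destruct Rle_dec; lra. }
        specialize (Hd1 xi H0). specialize (C1 u H). nra. }
  destruct (Req_dec m c) as [->|Hmc'].
  - lra.
  - destruct (cont_gt g m 0 (Hgcont m ltac:(lra)) C2) as [d [Hd0 Hd1]].
    set (s := Rmin c (m + d/2)).
    assert (Hs : E s).
    { split. unfold s, Rmin; destruct Rle_dec; lra.
      intros u Hu. destruct (Rlt_or_le u m). apply C1; lra.
      apply Hd1. apply Rabs_lt_between'. unfold s, Rmin in Hu; destruct Rle_dec in Hu; lra. }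
    specialize (Hub s Hs). unfold s, Rmin in Hub; destruct Rle_dec in Hub; lra.
Qed.

Lemma ival_between S T a b z : in_ival S T a -> in_ival S T b ->
  Rmin a b <= z <= Rmax a b -> in_ival S T z.
Proof.
  unfold in_ival, Rmin, Rmax. intros [H1 H2] [H3 H4] Hz.
  destruct Rle_dec;
  destruct S, T; simpl in *; split; auto; lra.
Qed.

Lemma ival_right S T t0 t : in_ival S T t0 -> t0 <= t -> Rbar_lt t T -> in_ival S T t.
Proof.
  unfold in_ival. intros [H1 H2] H3 H4. split; auto.
  destruct S; simpl in *; auto; lra.
Qed.

Lemma ival_open S T u : in_ival S T u -> locally u (in_ival S T).
Proof.
  intros H. apply (open_and (T:=R_UniformSpace) (fun t : R => Rbar_lt S t) (fun t : R => Rbar_lt t T)).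
  apply open_Rbar_gt. apply open_Rbar_lt. exact H.
Qed.

Lemma RInt_deriv S T (w : R -> R) a u :
  (forall t, in_ival S T t -> continuous w t) ->
  in_ival S T a -> in_ival S T u -> is_derive (fun s => RInt w a s) u (w u).
Proof.
  intros Hc Ha Hu.
  apply (is_derive_RInt w (RInt w a) a u).
  - apply (filter_imp (in_ival S T)).
    + intros b Hb. apply (RInt_correct (V:=R_CompleteNormedModule)).
      apply ex_RInt_continuous. intros z Hz. apply Hc.
      apply (ival_between S T a b z); auto.
    + apply ival_open; auto.
  - apply Hc; auto.
Qed.

Section S.
Variables (n : nat) (lam beta : R) (w x y : R -> R).
Definition dX t := x t ^ 2 - x t * y t + INR n - 1 - lam * w t ^ 2.
Definition dY t := x t * y t - INR n * x t ^ 2 - lam * w t ^ 2.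
Definition Dp t := (3 * x t - y t) * dX t + (INR n - 1) * x t * (x t ^ 2 - 1).
Definition Gf t := -(x t ^ 2 / 2 + x t * y t + lam * w t ^ 2).
Definition Gp t := -(x t * dX t + dX t * y t + x t * dY t + 2 * lam * w t * (x t * w t)).
Definition Rf t := w t / x t.
Definition Rp t := w t * (x t ^ 2 - dX t) / x t ^ 2.
Definition qf t := (x t * y t + lam * w t ^ 2) / x t ^ 2.
Definition Pq t := (dX t * y t + x t * dY t + 2 * lam * x t * w t ^ 2) * x t
   - 2 * (x t * y t + lam * w t ^ 2) * dX t.
Definition Psi t := w t / x t * exp (beta * qf t).
Definition Psip t := exp (beta * qf t) * w t / x t ^ 2 * (x t ^ 2 - dX t + beta * Pq t / x t ^ 2).

Hypothesis (t : R) (Hw : is_derive w t (x t * w t)) (Hx : is_derive x t (dX t))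
  (Hy : is_derive y t (dY t)).

Ltac rw := try replace (Derive (fun z => w z) t) with (x t * w t) by (symmetry; apply is_derive_unique; exact Hw);
  try replace (Derive (fun z => x z) t) with (dX t) by (symmetry; apply is_derive_unique; exact Hx);
  try replace (Derive (fun z => y z) t) with (dY t) by (symmetry; apply is_derive_unique; exact Hy).
Ltac exd := repeat split; first [exists (x t * w t); exact Hw | exists (dX t); exact Hx | exists (dY t); exact Hy | auto].

Lemma der_D : is_derive dX t (Dp t).
Proof. unfold dX, Dp. auto_derive. exd. rw. unfold dX, dY. ring. Qed.

Lemma der_G : is_derive Gf t (Gp t).
Proof. unfold Gf, Gp. auto_derive. exd. rw. unfold dX, dY. field. Qed.

Lemma der_R : x t <> 0 -> is_derive Rf t (Rp t).
Proof. intros. unfold Rf, Rp. auto_derive. exd. rw. unfold dX, dY. field. auto. Qed.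

Lemma der_Psi : x t <> 0 -> is_derive Psi t (Psip t).
Proof. intros. unfold Psi, Psip, qf, Pq. auto_derive. exd. rw. unfold dX, dY. replace (beta * ((x t * y t + lam * (w t * (w t * 1))) * / (x t * (x t * 1)))) with (beta * ((x t * y t + lam * w t ^ 2) / x t ^ 2)) by (field; auto). field. auto. Qed.

Lemma ex_dX : ex_derive dX t.
Proof. exists (Dp t). apply der_D. Qed.
Lemma ex_Gp : ex_derive Gp t.
Proof. unfold Gp, dX, dY. auto_derive. exd. Qed.
Lemma ex_Dp : ex_derive Dp t.
Proof. unfold Dp, dX. auto_derive. exd. Qed.
End S.

Lemma P1 (X Y L m u0 : R) : 1 < u0 -> u0 <= X^2 -> 1 <= m -> 0 <= L ->
  0 < X^2 - X*Y + m - L -> - X^2/2 <= X*Y + L ->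
  ((X^2 - X*Y + m - L) * Y + X * (X*Y - (m+1)*X^2 - L) + 2 * X * L) * X
   - 2 * (X*Y + L) * (X^2 - X*Y + m - L) <= - ((u0 - 1)/u0) * X^4.
Proof.
  intros Hu0 Hu Hm HL HD HQ.
  assert (Hid : ((X^2 - X*Y + m - L) * Y + X * (X*Y - (m+1)*X^2 - L) + 2 * X * L) * X
   - 2 * (X*Y + L) * (X^2 - X*Y + m - L) = (X*Y+L)^2 + (X*Y+L)*L - L*X^2 - (m+1)*(X^2)^2 - m*((X*Y+L)+L)).
  { ring. }
  rewrite Hid.
  set (Q := X*Y + L) in *. set (u := X^2) in *. replace (X^4) with (u^2) by (unfold u; ring).
  assert (HQb : Q < u + m) by (unfold Q, u in *; lra).
  assert (HQa : -u/2 <= Q) by (unfold Q, u in *; lra).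
  assert (H1 : L * (Q - u - m) <= 0) by nra.
  assert (Hc : (u0 - 1)/u0 * u <= u - 1).
  { apply (Rmult_le_reg_r u0). lra. field_simplify. 2: lra. nra. }
  set (c := (u0 - 1)/u0) in *.
  assert (Hc0 : 0 <= c). { unfold c. apply Rle_mult_inv_pos; lra. }
  set (a := -u/2). set (b := u + m).
  assert (H2 : (Q - a) * (Q - b) <= 0) by (unfold a, b; nra).
  set (g := fun q => (a + b - m) * q - a*b - (m+1)*u^2).
  assert (Hu1 : 1 <= u) by lra.
  assert (Hcu : c * u^2 <= (u - 1) * u) by (replace (c*u^2) with ((c*u)*u) by ring; apply Rmult_le_compat_r; lra).
  assert (Hmu : m * u <= m * u^2) by (replace (m*u^2) with ((m*u)*u) by ring; rewrite <- (Rmult_1_r (m*u)) at 1; apply Rmult_le_compat_l; nra).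
  assert (Hga : g a <= - c * u^2). { unfold g, a, b. nra. }
  assert (Hgb : g b <= - c * u^2).
  { unfold g, a, b. assert (m*u*(u-1) >= u*(u-1)) by nra. nra. }
  assert (Hg : (b - a) * g Q = g a * (b - Q) + g b * (Q - a)) by (unfold g; ring).
  assert (HgQ : g Q <= - c * u^2).
  { assert (Hba : 0 < b - a) by (unfold a, b; lra).
    apply (Rmult_le_reg_l (b - a)); auto. rewrite Hg.
    assert (h1 : g a * (b - Q) <= - c * u^2 * (b - Q)) by (apply Rmult_le_compat_r; unfold b; lra).
    assert (h2 : g b * (Q - a) <= - c * u^2 * (Q - a)) by (apply Rmult_le_compat_r; unfold a; lra).
    nra. }
  unfold g in HgQ. nra.
Qed.

Lemma P2 (X Y L m : R) : 1 <= X -> 0 < L -> 1 <= m ->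
  -(X^2/2 + X*Y + L) = 0 ->
  0 < -(X * (X^2 - X*Y + m - L) + (X^2 - X*Y + m - L) * Y
        + X * (X*Y - (m+1)*X^2 - L) + 2 * L * X).
Proof.
  intros HX HL Hm HG.
  assert (HLe : L = - X^2/2 - X*Y) by lra. subst L.
  assert (HY : Y < - X / 2).
  { assert (0 < X * (- X/2 - Y)) by nra.
    assert (0 < - X/2 - Y); [|lra].
    apply (Rmult_lt_reg_l X); nra. }
  match goal with |- 0 < ?e => replace e with (m * X^3 - m * X - Y * (3/2 * X^2 + m)) by field end.
  assert (h1 : (Y + X/2) * (3/2 * X^2 + m) < 0).
  { apply Rmult_neg_pos; nra. }
  assert (h2 : m * X <= m * X^3).
  { apply Rmult_le_compat_l. lra. nra. }
  nra.
Qed.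
Lemma P3 (X Y W L m : R) : 0 < X -> 0 < W -> 1 <= m ->
  0 < -(X^2/2 + X*Y + L) ->
  W * (X^2 - (X^2 - X*Y + m - L)) / X^2 <= - W / 2.
Proof.
  intros HX HW Hm HG.
  apply (Rmult_le_reg_r (X^2)). nra.
  field_simplify. 2: lra. nra.
Qed.

Lemma der_comb (f g : R -> R) t a b k : is_derive f t a -> is_derive g t b ->
  is_derive (fun u => f u + k * g u) t (a + k * b).
Proof.
  intros Hf Hg.
  exact (is_derive_plus (K:=R_AbsRing) (V:=R_NormedModule) f (fun u => k * g u) t a (k*b) Hf
     (is_derive_scal g t k b Hg)).
Qed.

Theorem lemma3p7 (n : nat) (lam : R) (S T : Rbar) (w x y : R -> R) (t0 : R) :
  (2 <= n)%nat -> 0 < lam ->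
  is_maximal_solution n lam S T w x y ->
  (forall t, in_ival S T t -> 0 < w t) ->
  in_ival S T t0 ->
  1 < x t0 -> 0 < Derive x t0 ->
  exists M : R, forall t, t0 <= t -> Rbar_lt (Finite t) T -> RInt w t0 t <= M.
Proof.
  intros Hn Hlam [HST [Hsol _]] Hwpos Ht0 Hx0 HD0.
  assert (Hm : 1 <= INR n - 1).
  { apply le_INR in Hn. simpl in Hn. lra. }
  assert (Hder : forall t, in_ival S T t -> is_derive w t (x t * w t) /\
     is_derive x t (dX n lam w x y t) /\ is_derive y t (dY n lam w x y t)).
  { intros t Ht. exact (Hsol t Ht). }
  assert (Hcw : forall t, in_ival S T t -> continuous w t).
  { intros t Ht. apply (ex_derive_continuous (K:=R_AbsRing) (V:=R_NormedModule)).
    exists (x t * w t). apply Hder; auto. }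
  assert (HI : forall a t, t0 <= a <= t -> Rbar_lt t T -> in_ival S T a).
  { intros a t Ha HtT. apply (ival_between S T t0 t a); auto.
    apply (ival_right S T t0 t); auto; lra.
    rewrite Rmin_left by lra. rewrite Rmax_right by lra. lra. }
  assert (HD0' : 0 < dX n lam w x y t0).
  { rewrite <- (is_derive_unique x t0 _ (proj1 (proj2 (Hder t0 Ht0)))). exact HD0. }
  assert (HA : forall t, t0 <= t -> Rbar_lt t T -> 0 < dX n lam w x y t).
  { intros t Ht HtT.
    apply (barrier (dX n lam w x y) (Dp n lam w x y) t0 t); auto; try lra.
    - intros u Hu. destruct (Hder u (HI u t Hu HtT)) as [h1 [h2 h3]].
      apply der_D; auto.
    - intros u Hu. destruct (Hder u (HI u t Hu HtT)) as [h1 [h2 h3]].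
      apply (ex_derive_continuous (K:=R_AbsRing) (V:=R_NormedModule)).
      apply ex_Dp; auto.
    - intros tau Htau Hpos Hz.
      assert (Hxt : x t0 <= x tau).
      { apply (mono_ge x (dX n lam w x y) t0 tau). lra.
        intros u Hu. apply (Hder u (HI u t ltac:(lra) HtT)).
        intros u Hu. destruct (Req_dec u tau) as [->|]. lra.
        apply Rlt_le, Hpos; lra. }
      unfold Dp. rewrite Hz.
      assert (0 < x tau ^ 2 - 1) by nra.
      assert (0 < (INR n - 1) * x tau * (x tau ^ 2 - 1)).
      { apply Rmult_lt_0_compat; auto. apply Rmult_lt_0_compat; lra. }
      lra. }
  assert (HxA : forall t, t0 <= t -> Rbar_lt t T -> x t0 <= x t).
  { intros t Ht HtT. apply (mono_ge x (dX n lam w x y) t0 t); auto.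
    intros u Hu. apply (Hder u (HI u t Hu HtT)).
    intros u Hu. apply Rlt_le, HA. lra. apply (HI u t Hu HtT). }
  assert (HIr : forall t, t0 <= t -> Rbar_lt t T -> in_ival S T t).
  { intros t Ht HtT. apply (HI t t); auto; lra. }
  assert (HxA1 : forall t, t0 <= t -> Rbar_lt t T -> 1 < x t).
  { intros t Ht HtT. specialize (HxA t Ht HtT). lra. }
  assert (HRd : forall u, in_ival S T u -> is_derive (fun s => RInt w t0 s) u (w u)).
  { intros u Hu. apply (RInt_deriv S T w t0 u); auto. }
  destruct (classic (exists t1, t0 <= t1 /\ Rbar_lt t1 T /\ 0 < Gf lam w x y t1))
    as [[t1 [Ht1 [Ht1T HG1]]] | Hno].
  -
    assert (HG : forall t, t1 <= t -> Rbar_lt t T -> 0 < Gf lam w x y t).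
    { intros t Ht HtT.
      assert (HI1 : forall u, t1 <= u <= t -> in_ival S T u) by (intros u Hu; apply (HI u t); auto; lra).
      apply (barrier (Gf lam w x y) (Gp n lam w x y) t1 t); auto; try lra.
      - intros u Hu. destruct (Hder u (HI1 u Hu)) as [h1 [h2 h3]]. apply der_G; auto.
      - intros u Hu. destruct (Hder u (HI1 u Hu)) as [h1 [h2 h3]].
        apply (ex_derive_continuous (K:=R_AbsRing) (V:=R_NormedModule)).
        apply ex_Gp; auto.
      - intros tau Htau _ Hz.
        assert (Hxt : 1 < x tau) by (apply HxA1; [lra | apply (HI1 tau ltac:(lra))]).
        assert (Hwt : 0 < w tau) by (apply Hwpos; apply HI1; lra).
        assert (E : Gp n lam w x y tau = -(x tau * (x tau^2 - x tau*y tau + (INR n - 1) - lam * w tau ^2)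
           + (x tau^2 - x tau*y tau + (INR n - 1) - lam * w tau ^2) * y tau
           + x tau * (x tau*y tau - ((INR n - 1)+1)*x tau^2 - lam * w tau ^2) + 2 * (lam * w tau ^2) * x tau))
          by (unfold Gp, dX, dY; ring).
        rewrite E. apply P2; auto. lra. apply Rmult_lt_0_compat; auto. apply pow_lt; auto. }
    set (H := fun u => RInt w t0 u + 2 * Rf w x u).
    assert (Hmono : forall t, t1 <= t -> Rbar_lt t T -> H t <= H t1).
    { intros t Ht HtT.
      assert (HI1 : forall u, t1 <= u <= t -> in_ival S T u) by (intros u Hu; apply (HI u t); auto; lra).
      apply (mono_le H (fun u => w u + 2 * Rp n lam w x y u) t1 t); auto.
      - intros u Hu. destruct (Hder u (HI1 u Hu)) as [h1 [h2 h3]].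
        apply der_comb. apply HRd; auto. apply der_R; auto.
        assert (1 < x u) by (apply HxA1; [lra | apply (HI1 u ltac:(lra))]). lra.
      - intros u Hu.
        assert (Hxt : 1 < x u) by (apply HxA1; [lra | apply (HI1 u ltac:(lra))]).
        assert (Hwt : 0 < w u) by (apply Hwpos; apply HI1; lra).
        assert (HGu : 0 < Gf lam w x y u) by (apply HG; [lra | apply (HI1 u ltac:(lra))]).
        assert (E : Rp n lam w x y u = w u * (x u ^ 2 - (x u^2 - x u * y u + (INR n - 1) - lam * w u ^2)) / x u ^ 2)
          by (unfold Rp, dX; field; lra).
        assert (Rp n lam w x y u <= - w u / 2).
        { rewrite E. apply P3; auto; lra. }
        lra. }
    exists (H t1). intros t Ht HtT.
    destruct (Rle_or_lt t1 t) as [Hle|Hlt].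
    + specialize (Hmono t Hle HtT). unfold H in Hmono.
      assert (0 < Rf w x t).
      { unfold Rf. assert (1 < x t) by (apply HxA1; auto; lra).
        apply Rdiv_lt_0_compat; [apply Hwpos, HIr; auto; lra | lra]. }
      unfold H. lra.
    + assert (RInt w t0 t <= RInt w t0 t1).
      { apply (mono_ge (fun s => RInt w t0 s) w t t1). lra.
        intros u Hu. apply HRd. apply (HI u t1); auto; lra.
        intros u Hu. apply Rlt_le, Hwpos. apply (HI u t1); auto; lra. }
      assert (0 < Rf w x t1).
      { unfold Rf. assert (1 < x t1) by (apply HxA1; auto).
        apply Rdiv_lt_0_compat; [apply Hwpos, HIr; auto | lra]. }
      unfold H. lra.
  - assert (HGle : forall t, t0 <= t -> Rbar_lt t T -> Gf lam w x y t <= 0).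
    { intros t Ht HtT. destruct (Rle_or_lt (Gf lam w x y t) 0); auto.
      exfalso. apply Hno. exists t. auto. }
    set (u0 := x t0 ^ 2).
    assert (Hu0 : 1 < u0) by (unfold u0; nra).
    set (c := (u0 - 1) / u0).
    assert (Hc : 0 < c) by (unfold c; apply Rdiv_lt_0_compat; lra).
    set (beta := 2 / c).
    assert (Hbeta : 0 < beta) by (unfold beta; apply Rdiv_lt_0_compat; lra).
    assert (Hbc : beta * c = 2) by (unfold beta; field; lra).
    set (K := exp (beta / 2)).
    set (H := fun u => RInt w t0 u + K * Psi lam beta w x y u).
    assert (Hmono : forall t, t0 <= t -> Rbar_lt t T -> H t <= H t0).
    { intros t Ht HtT.
      assert (HI1 : forall u, t0 <= u <= t -> in_ival S T u) by (intros u Hu; apply (HI u t); auto; lra).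
      apply (mono_le H (fun u => w u + K * Psip n lam beta w x y u) t0 t); auto.
      - intros u Hu. destruct (Hder u (HI1 u Hu)) as [h1 [h2 h3]].
        apply der_comb. apply HRd; auto. apply der_Psi; auto.
        assert (1 < x u) by (apply HxA1; [lra | apply (HI1 u ltac:(lra))]). lra.
      - intros u Hu.
        assert (HuT : Rbar_lt u T) by apply (HI1 u Hu).
        assert (Hxt : 1 < x u) by (apply HxA1; [lra | auto]).
        assert (Hxu : x t0 <= x u) by (apply HxA; [lra | auto]).
        assert (Hwt : 0 < w u) by (apply Hwpos; apply HI1; lra).
        assert (HGu : Gf lam w x y u <= 0) by (apply HGle; [lra | auto]).
        assert (HDu : 0 < dX n lam w x y u) by (apply HA; [lra | auto]).
        set (X := x u) in *. set (Yv := y u) in *. set (L := lam * w u ^ 2).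
        assert (HL : 0 <= L) by (unfold L; apply Rmult_le_pos; [lra | apply pow_le; lra]).
        assert (HPq : Pq n lam w x y u <= - c * X ^ 4).
        { assert (E : Pq n lam w x y u = ((X^2 - X*Yv + (INR n - 1) - L) * Yv + X * (X*Yv - ((INR n - 1)+1)*X^2 - L) + 2 * X * L) * X
            - 2 * (X*Yv + L) * (X^2 - X*Yv + (INR n - 1) - L)) by (unfold Pq, dX, dY, X, Yv, L; ring).
          rewrite E. unfold c. apply P1; auto.
          - unfold u0. nra.
          - unfold dX in HDu. fold X Yv in HDu. unfold L. lra.
          - unfold Gf in HGu. fold X Yv in HGu. unfold L. lra. }
        assert (HX2 : 0 < X ^ 2) by nra.
        assert (HB : X ^ 2 - dX n lam w x y u + beta * Pq n lam w x y u / X ^ 2 <= - X ^ 2).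
        { assert (beta * Pq n lam w x y u <= - 2 * X ^ 4).
          { replace (- 2 * X ^ 4) with (beta * (- c * X ^ 4)) by (transitivity (-(beta*c)*X^4); [ring | rewrite Hbc; ring]).
            apply Rmult_le_compat_l; lra. }
          assert (beta * Pq n lam w x y u / X ^ 2 <= - 2 * X ^ 2).
          { apply (Rmult_le_reg_r (X^2)); auto.
            replace (beta * Pq n lam w x y u / X ^ 2 * X ^ 2) with (beta * Pq n lam w x y u) by (field; lra).
            replace (-2 * X ^ 2 * X ^ 2) with (-2 * X^4) by ring. lra. }
          lra. }
        set (E := exp (beta * qf lam w x y u)).
        assert (HE : exp (- (beta / 2)) <= E).
        { unfold E. assert (Hq : - (1/2) <= qf lam w x y u).
          { unfold qf. fold X Yv. unfold Gf in HGu. fold X Yv in HGu.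
            apply (Rmult_le_reg_r (X^2)); auto.
            replace ((X * Yv + lam * w u ^ 2) / X ^ 2 * X ^ 2) with (X * Yv + lam * w u ^ 2) by (field; lra).
            lra. }
          destruct (Req_dec (- (beta / 2)) (beta * qf lam w x y u)) as [<-|Hne]. lra.
          apply Rlt_le, exp_increasing. nra. }
        assert (HP : Psip n lam beta w x y u <= - E * w u).
        { unfold Psip. fold E X.
          replace (- E * w u) with (E * w u / X ^ 2 * (- X ^ 2)) by (field; lra).
          apply Rmult_le_compat_l; auto.
          apply Rmult_le_pos. apply Rmult_le_pos. unfold E; apply Rlt_le, exp_pos. lra.
          apply Rlt_le, Rinv_0_lt_compat; auto. }
        assert (HK : K * exp (- (beta / 2)) = 1).
        { unfold K. rewrite <- exp_plus. replace (beta / 2 + - (beta / 2)) with 0 by ring. apply exp_0. }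
        assert (HKp : 0 < K) by apply exp_pos.
        assert (K * Psip n lam beta w x y u <= - w u).
        { assert (K * Psip n lam beta w x y u <= K * (- E * w u)) by (apply Rmult_le_compat_l; lra).
          assert (K * exp (- (beta / 2)) * w u <= K * E * w u).
          { apply Rmult_le_compat_r. lra. apply Rmult_le_compat_l; lra. }
          rewrite HK in *. nra. }
        lra. }
    exists (K * Psi lam beta w x y t0). intros t Ht HtT.
    specialize (Hmono t Ht HtT). unfold H in Hmono.
    rewrite RInt_point in Hmono.
    assert (0 < K * Psi lam beta w x y t).
    { apply Rmult_lt_0_compat. apply exp_pos. unfold Psi.
      apply Rmult_lt_0_compat. 2: apply exp_pos.
      assert (1 < x t) by (apply HxA1; auto).
      apply Rdiv_lt_0_compat; [apply Hwpos, HIr; auto | lra]. }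
    change (@zero R_CompleteNormedModule) with 0 in Hmono. lra.
Qed.
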